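(* Let $X$, $Y$ be metrizable spaces, $f:X\to Y$, and let $\xi$ be a countable ordinal with $\xi>1$. The following are equivalent: (i) $f^{-1}(A)\in\mathbf{\Sigma}^0_\xi(X)$ for every $A\in\mathbf{\Sigma}^0_\xi(Y)$; (ii) $f^{-1}(A)\in\mathbf{\Pi}^0_\xi(X)$ for every $A\in\mathbf{\Pi}^0_\xi(Y)$; (iii) $f^{-1}(A)\in\mathbf{\Delta}^0_\xi(X)$ for every $A\in\mathbf{\Delta}^0_\xi(Y)$; (iv) $f^{-1}(A)\in\mathbf{\Sigma}^0_\xi(X)$ for every $\nu<\xi$ and every $A\in\mathbf{\Pi}^0_\nu(Y)$; (v) $f^{-1}(A)\in\mathbf{\Delta}^0_\xi(X)$ for every $\nu<\xi$ and every $A\in\mathbf{\Sigma}^0_\nu(Y)$.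
   Context: Work in ZF plus countable choice over the reals. $\mathbf{\Sigma}^0_\nu,\mathbf{\Pi}^0_\nu,\mathbf{\Delta}^0_\nu$ denote the levels of the Borel hierarchy, with the convention $\mathbf{\Sigma}^0_0=\mathbf{\Pi}^0_0=\mathbf{\Delta}^0_0=\mathbf{\Delta}^0_1$ (the clopen sets). *)

(* Defs.v *)
From HB Require Import structures.
From mathcomp Require Import all_boot all_order all_algebra.
From mathcomp Require Import all_classical all_reals all_analysis.
Set Implicit Arguments. Unset Strict Implicit. Unset Printing Implicit Defensive.
Import Order.TTheory GRing.Theory Num.Theory.
Local Open Scope classical_set_scope.
Local Open Scope ring_scope.

Definition metrizable (R : realType) (T : topologicalType) : Prop :=
  exists d : T -> T -> R,
    [/\ (forall x y, 0 <= d x y),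
        (forall x y, d x y = 0 <-> x = y),
        (forall x y, d x y = d y x),
        (forall x y z, d x z <= d x y + d y z) &
        (forall U : set T, open U <->
           (forall x, U x -> exists2 e : R, 0 < e & [set y | d x y < e] `<=` U))].

(** Countable ordinals are represented by elements of countable well-ordered
    types: the ordinal represented by [xi : W] is the order type of the set of
    its strict predecessors. Every countable ordinal arises this way (take
    W = xi + 1) and the Borel classes only depend on that order type. *)
Record cwo := CWO {
  cwo_car :> Type;
  cwo_lt : cwo_car -> cwo_car -> Prop;
  cwo_wf : well_founded cwo_lt;
  cwo_irr : forall x, ~ cwo_lt x x;
  cwo_trans : forall x y z, cwo_lt x y -> cwo_lt y z -> cwo_lt x z;
  cwo_total : forall x y, [\/ cwo_lt x y, x = y | cwo_lt y x];
  cwo_countable : exists f : cwo_car -> nat, injective f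
}.

Section Borel.
Variables (X : topologicalType) (W : cwo).

Definition ord_is0 (xi : W) : Prop := forall nu, ~ cwo_lt nu xi.
Definition ord_is1 (xi : W) : Prop :=
  exists2 z, cwo_lt z xi & forall nu, cwo_lt nu xi -> nu = z.

Definition Sigma_step (xi : W)
  (rec : forall nu : W, cwo_lt nu xi -> set (set X)) : set (set X) :=
  fun A =>
    (ord_is0 xi /\ clopen A) \/
    (ord_is1 xi /\ open A) \/
    [/\ ~ ord_is0 xi, ~ ord_is1 xi &
      exists (B : nat -> set X) (nu : nat -> W) (h : forall n, cwo_lt (nu n) xi),
        (forall n, rec (nu n) (h n) (~` B n)) /\ A = \bigcup_n B n].

Definition Sigma0 : W -> set (set X) :=
  Fix (@cwo_wf W) (fun _ => set (set X)) Sigma_step.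

Definition Pi0 (xi : W) : set (set X) := fun A => Sigma0 xi (~` A).

Definition Delta0 (xi : W) : set (set X) := fun A => Sigma0 xi A /\ Pi0 xi A.

End Borel.

Arguments Sigma0 X {W} xi.
Arguments Pi0 X {W} xi.
Arguments Delta0 X {W} xi.

(* Main.v *)
Require Import Defs.
From HB Require Import structures.
From mathcomp Require Import all_boot all_order all_algebra.
From mathcomp Require Import all_classical all_reals all_analysis.
Import Order.TTheory GRing.Theory Num.Theory.
Local Open Scope classical_set_scope.

Section Aux.
Context {T : topologicalType} {W : cwo}.

Lemma Sigma0E (xi : W) A : Sigma0 T xi A <->
    (ord_is0 xi /\ clopen A) \/
    (ord_is1 xi /\ open A) \/
    [/\ ~ ord_is0 xi, ~ ord_is1 xi &
      exists (B : nat -> set T) (nu : nat -> W) (h : forall n, cwo_lt (nu n) xi),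
        (forall n, Sigma0 T (nu n) (~` B n)) /\ A = \bigcup_n B n].
Proof.
rewrite /Sigma0 Fix_eq //.
move=> x f g fg; have -> : f = g.
  apply: functional_extensionality_dep => y.
  by apply: functional_extensionality_dep => p; exact: fg.
by [].
Qed.

Definition big2 (xi : W) := ~ ord_is0 xi /\ ~ ord_is1 xi.

Lemma big2_of (xi : W) : (exists a b : W, cwo_lt a b /\ cwo_lt b xi) -> big2 xi.
Proof.
move=> [a [b [ab bxi]]]; split.
  by move=> h; exact: (h b).
move=> [z _ hz]; have ea := hz a (cwo_trans ab bxi); have eb := hz b bxi.
by apply: (cwo_irr (x:=a)); rewrite {2}ea -eb.
Qed.

Lemma Sigma_bigE (xi : W) A : big2 xi -> Sigma0 T xi A <->
  exists (B : nat -> set T) (nu : nat -> W),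
    (forall n, cwo_lt (nu n) xi) /\ (forall n, Sigma0 T (nu n) (~` B n)) /\
    A = \bigcup_n B n.
Proof.
move=> [h0 h1]; rewrite Sigma0E; split.
  case=> [[]//|[[]//|[_ _ [B [nu [h [HB ->]]]]]]].
  by exists B, nu.
move=> [B [nu [h [HB ->]]]]; right; right; split => //.
by exists B, nu, h.
Qed.

Lemma Sigma_union (xi : W) (C : nat -> set T) : big2 xi ->
  (forall n, Sigma0 T xi (C n)) -> Sigma0 T xi (\bigcup_n C n).
Proof.
move=> b2 HC.
have : forall n, exists p : (nat -> set T) * (nat -> W),
    (forall m, cwo_lt (p.2 m) xi) /\ (forall m, Sigma0 T (p.2 m) (~` p.1 m)) /\
    C n = \bigcup_m p.1 m.
  move=> n; have /(Sigma_bigE _ _ b2) [B [nu H]] := HC n.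
  by exists (B, nu).
move=> /choice [p Hp].
pose g k := match (unpickle k : option (nat * nat)) with
            | Some nm => nm | None => (0%N, 0%N) end.
apply/(Sigma_bigE _ _ b2).
exists (fun k => (p (g k).1).1 (g k).2), (fun k => (p (g k).1).2 (g k).2).
split; first by move=> k; case: (Hp (g k).1) => H _; exact: H.
split; first by move=> k; case: (Hp (g k).1) => _ [H _]; exact: H.
apply/seteqP; split => x.
  move=> [n _]; case: (Hp n) => _ [_ ->] [m _ hx].
  exists (pickle (n, m)) => //.
  by rewrite /g pickleK.
move=> [k _ hx]; exists (g k).1 => //.
by case: (Hp (g k).1) => _ [_ ->]; exists (g k).2.
Qed.

Lemma Pi_sub (xi nu : W) A : big2 xi -> cwo_lt nu xi ->
  Pi0 T nu A -> Sigma0 T xi A.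
Proof.
move=> b2 lt HA; apply/(Sigma_bigE _ _ b2).
exists (fun _ => A), (fun _ => nu); split => //; split => //.
apply/seteqP; split => x; first by move=> hx; exists 0%N.
by move=> [].
Qed.

Lemma Sigma_sub (R : realType) (xi nu : W) A : metrizable R T -> big2 xi ->
  cwo_lt nu xi -> Sigma0 T nu A -> Sigma0 T xi A.
Proof.
move=> [d [d0 dE dC dT dO]] b2 lt.
move/Sigma0E => [[h0 cA]|[[h1 oA]|[_ _ [B [mu [h [HB ->]]]]]]].
- apply: (@Pi_sub xi nu A b2 lt); rewrite /Pi0; apply/Sigma0E; left; split => //.
  exact: clopenC.
- pose F (n : nat) := [set x | forall y, (d x y < (n.+1%:R)^-1)%R -> A y].
  apply/(Sigma_bigE _ _ b2); exists F, (fun _ => nu); split => //; split.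
    move=> n; apply/Sigma0E; right; left; split => //.
    apply/dO => x /= /existsNP [y /not_implyP [dxy nAy]].
    exists ((n.+1%:R)^-1 - d x y)%R; first by rewrite subr_gt0.
    move=> z /= dxz Fz; apply: nAy; apply: Fz.
    apply: (le_lt_trans (dT z x y)); rewrite dC.
    by rewrite -ltrBrDr.
  apply/seteqP; split => x.
    move=> Ax; have [e e0 sub] := proj1 (dO A) oA x Ax.
    have [n hn] : exists n : nat, ((n.+1%:R)^-1 < e)%R.
      exists (Num.Def.archi_bound e^-1).
      rewrite invf_plt ?posrE ?ltr0n //.
      have he : (0 <= e^-1)%R by rewrite invr_ge0 ltW.
      have HH := Num.Theory.archi_boundP he. apply: (lt_trans HH).
      by rewrite ltr_nat.
    exists n => // y dxy; apply: sub; exact: lt_trans dxy hn.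
  move=> [n _ Fx]; apply: Fx; by rewrite (proj2 (dE x x) erefl) invr_gt0 ltr0n.
- apply/(Sigma_bigE _ _ b2); exists B, mu; split => //.
  by move=> n; exact: cwo_trans (h n) lt.
Qed.

End Aux.
Arguments Pi_sub {T W xi nu A}.
Arguments Sigma_sub {T W R xi nu A}.


Theorem mainTheorem7 (R : realType) (X Y : topologicalType)
  (hX : metrizable R X) (hY : metrizable R Y) (f : X -> Y)
  (W : cwo) (xi : W) (hxi : exists a b : W, cwo_lt a b /\ cwo_lt b xi) :
  let P1 := forall A, Sigma0 Y xi A -> Sigma0 X xi (f @^-1` A) in
  let P2 := forall A, Pi0 Y xi A -> Pi0 X xi (f @^-1` A) in
  let P3 := forall A, Delta0 Y xi A -> Delta0 X xi (f @^-1` A) in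
  let P4 := forall nu : W, cwo_lt nu xi ->
              forall A, Pi0 Y nu A -> Sigma0 X xi (f @^-1` A) in
  let P5 := forall nu : W, cwo_lt nu xi ->
              forall A, Sigma0 Y nu A -> Delta0 X xi (f @^-1` A) in
  [/\ P1 <-> P2, P1 <-> P3, P1 <-> P4 & P1 <-> P5].
Proof.
have b2 := big2_of _ hxi.
move=> P1 P2 P3 P4 P5.
have P41 : P4 -> P1.
  rewrite /P1 /P2 /P3 /P4 /P5.
  move=> H4 A /(Sigma_bigE _ _ b2) [B [nu [h [HB ->]]]].
  rewrite preimage_bigcup; apply: Sigma_union => // n.
  apply: (H4 (nu n) (h n)); exact: HB.
have P14 : P1 -> P4.
  rewrite /P1 /P2 /P3 /P4 /P5.
  by move=> H1 nu lt A HA; apply: H1; exact: (Pi_sub b2 lt HA).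
have P13 : P1 -> P3.
  rewrite /P1 /P2 /P3 /P4 /P5.
  move=> H1 A [HS HP]; split; first exact: H1.
  by rewrite /Pi0 preimage_setC; apply: H1.
have P34 : P3 -> P4.
  rewrite /P1 /P2 /P3 /P4 /P5.
  move=> H3 nu lt A HA; apply: (proj1 (H3 A _)); split.
    exact: (Pi_sub b2 lt HA).
  exact: (Sigma_sub hY b2 lt HA).
have P15 : P1 -> P5.
  rewrite /P1 /P2 /P3 /P4 /P5.
  move=> H1 nu lt A HA; apply: (P13 H1); split.
    exact: (Sigma_sub hY b2 lt HA).
  apply: (Pi_sub b2 lt); by rewrite /Pi0 setCK.
have P54 : P5 -> P4.
  rewrite /P1 /P2 /P3 /P4 /P5.
  move=> H5 nu lt A HA; have [_ HP] := H5 nu lt _ HA.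
  by move: HP; rewrite /Pi0 preimage_setC setCK.
rewrite /P1 /P2 /P3 /P4 /P5 in P41 P14 P13 P34 P15 P54 *.
split; split => //.
- move=> H1 A HA; rewrite /Pi0 preimage_setC; exact: H1.
- move=> H2 A HA; rewrite -[A]setCK -preimage_setC.
  apply: H2; by rewrite /Pi0 setCK.
- by move=> H3; apply: P41; apply: P34.
- by move=> H5; apply: P41; apply: P54.
Qed.
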